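(* For $N\ge3$, inside $O_N^+$: $$O_N\cap\bar O_N=H_N,\quad O_N\cap\bar O_N^*=H_N,\quad O_N^*\cap\bar O_N=H_N,\quad O_N^*\cap\bar O_N^*=H_N^*.$$ For $N=2$: $O_2\cap\bar O_2=H_2$, $O_2\cap\bar O_2^*=O_2$, $O_2^*\cap\bar O_2=\bar O_2$, $O_2^*\cap\bar O_2^*=O_2^+$.
   Context: $C(O_N^+)$ is the universal $C^*$-algebra generated by self-adjoint $u_{ij}$ ($1\le i,j\le N$) with $u=(u_{ij})$ orthogonal, a compact quantum group with $\Delta(u_{ij})=\sum_ku_{ik}\otimes u_{kj}$. Closed quantum subgroups are defined by imposing relations on the $u_{ij}$; the intersection of two is obtained by imposing both sets of relations. With $a,b,c$ ranging over the entries $u_{ij}$: $O_N$: all entries commute (orthogonal group); $H_N\subset O_N$: signed permutation matrices; $O_N^*$: $abc=cba$ for all $a,b,c$; $\bar O_N$: $ab=-ba$ if $a\ne b$ are on the same row or same column, $ab=ba$ otherwise; $\bar O_N^*$: $abc=-cba$ if $(r\le2,s=3)$ or $(r=3,s\le2)$, and $abc=cba$ if $(r\le2,s\le2)$ or $r=s=3$, where $r$ and $s$ are the numbers of distinct rows and of distinct columns of $u$ containing $a,b,c$; $H_N^+$: $u_{ij}u_{ik}=0=u_{ji}u_{ki}$ for $j\ne k$; $H_N^*=H_N^+\cap O_N^*$. *)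

(* Defs.v *)
From Stdlib Require Import Reals Arith.
Open Scope R_scope.

(** A complex algebra is presented as a real algebra together with a central
    element [ci] with [ci * ci = -1]; the complex scalar a + b i acts on x as
    a x + b (ci x). *)
Record CStarAlgebra := {
  car :> Type;
  c0 : car; c1 : car;
  cadd : car -> car -> car; copp : car -> car; cmul : car -> car -> car;
  rscal : R -> car -> car;
  ci : car;
  cstar : car -> car;
  cnorm : car -> R;
  caddA : forall x y z, cadd x (cadd y z) = cadd (cadd x y) z;
  caddC : forall x y, cadd x y = cadd y x;
  cadd0 : forall x, cadd c0 x = x;
  caddN : forall x, cadd (copp x) x = c0;
  cmulA : forall x y z, cmul x (cmul y z) = cmul (cmul x y) z;
  cmul1l : forall x, cmul c1 x = x;
  cmul1r : forall x, cmul x c1 = x;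
  cmulDl : forall x y z, cmul (cadd x y) z = cadd (cmul x z) (cmul y z);
  cmulDr : forall x y z, cmul x (cadd y z) = cadd (cmul x y) (cmul x z);
  rscalA : forall a b x, rscal a (rscal b x) = rscal (a * b) x;
  rscal1 : forall x, rscal 1 x = x;
  rscalDl : forall a b x, rscal (a + b) x = cadd (rscal a x) (rscal b x);
  rscalDr : forall a x y, rscal a (cadd x y) = cadd (rscal a x) (rscal a y);
  rscal_mull : forall a x y, cmul (rscal a x) y = rscal a (cmul x y);
  rscal_mulr : forall a x y, cmul x (rscal a y) = rscal a (cmul x y);
  ci_sq : cmul ci ci = copp c1;
  ci_central : forall x, cmul ci x = cmul x ci;
  cstarK : forall x, cstar (cstar x) = x;
  cstarD : forall x y, cstar (cadd x y) = cadd (cstar x) (cstar y);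
  cstarM : forall x y, cstar (cmul x y) = cmul (cstar y) (cstar x);
  cstarZ : forall a x, cstar (rscal a x) = rscal a (cstar x);
  cstar_ci : cstar ci = copp ci;
  cnorm_eq0 : forall x, cnorm x = 0 <-> x = c0;
  cnormD : forall x y, cnorm (cadd x y) <= cnorm x + cnorm y;
  cnormZ : forall a b x,
      cnorm (cadd (rscal a x) (rscal b (cmul ci x))) = sqrt (a ^ 2 + b ^ 2) * cnorm x;
  cnormM : forall x y, cnorm (cmul x y) <= cnorm x * cnorm y;
  cnorm_cstar : forall x, cnorm (cmul (cstar x) x) = cnorm x * cnorm x;
  ccomplete : forall s : nat -> car,
      (forall eps, 0 < eps -> exists M, forall m n, (M <= m)%nat -> (M <= n)%nat ->
          cnorm (cadd (s m) (copp (s n))) < eps) ->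
      exists l, forall eps, 0 < eps -> exists M, forall n, (M <= n)%nat ->
          cnorm (cadd (s n) (copp l)) < eps
}.

Arguments c0 {c}. Arguments c1 {c}. Arguments cadd {c}. Arguments copp {c}.
Arguments cmul {c}. Arguments cstar {c}.

Fixpoint csum {A : CStarAlgebra} (n : nat) (f : nat -> A) : A :=
  match n with
  | O => c0
  | S n' => cadd (csum n' f) (f n')
  end.

Definition kron {A : CStarAlgebra} (i j : nat) : A :=
  if Nat.eqb i j then c1 else c0.

(** [u] is an N x N matrix of self-adjoint elements which is orthogonal
    (u u^t = u^t u = 1): these are the defining relations of C(O_N^+). *)
Definition orth_sa (N : nat) {A : CStarAlgebra} (u : nat -> nat -> A) : Prop :=
  (forall i j, (i < N)%nat -> (j < N)%nat -> cstar (u i j) = u i j) /\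
  (forall i j, (i < N)%nat -> (j < N)%nat ->
      csum N (fun k => cmul (u i k) (u j k)) = kron i j) /\
  (forall i j, (i < N)%nat -> (j < N)%nat ->
      csum N (fun k => cmul (u k i) (u k j)) = kron i j).

Definition rel_O (N : nat) {A : CStarAlgebra} (u : nat -> nat -> A) : Prop :=
  forall i j k l, (i < N)%nat -> (j < N)%nat -> (k < N)%nat -> (l < N)%nat ->
    cmul (u i j) (u k l) = cmul (u k l) (u i j).

Definition rel_Ostar (N : nat) {A : CStarAlgebra} (u : nat -> nat -> A) : Prop :=
  forall i1 j1 i2 j2 i3 j3,
    (i1 < N)%nat -> (j1 < N)%nat -> (i2 < N)%nat -> (j2 < N)%nat ->
    (i3 < N)%nat -> (j3 < N)%nat ->
    cmul (cmul (u i1 j1) (u i2 j2)) (u i3 j3) = cmul (cmul (u i3 j3) (u i2 j2)) (u i1 j1).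

Definition rel_Obar (N : nat) {A : CStarAlgebra} (u : nat -> nat -> A) : Prop :=
  forall i j k l, (i < N)%nat -> (j < N)%nat -> (k < N)%nat -> (l < N)%nat ->
    if ((negb (Nat.eqb i k && Nat.eqb j l)) && (Nat.eqb i k || Nat.eqb j l))%bool
    then cmul (u i j) (u k l) = copp (cmul (u k l) (u i j))
    else cmul (u i j) (u k l) = cmul (u k l) (u i j).

Definition ndist3 (x y z : nat) : nat :=
  if Nat.eqb x y then (if Nat.eqb y z then 1 else 2)
  else if (Nat.eqb y z || Nat.eqb x z)%bool then 2 else 3.

Definition rel_Obarstar (N : nat) {A : CStarAlgebra} (u : nat -> nat -> A) : Prop :=
  forall i1 j1 i2 j2 i3 j3,
    (i1 < N)%nat -> (j1 < N)%nat -> (i2 < N)%nat -> (j2 < N)%nat ->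
    (i3 < N)%nat -> (j3 < N)%nat ->
    let r := ndist3 i1 i2 i3 in
    let s := ndist3 j1 j2 j3 in
    let abc := cmul (cmul (u i1 j1) (u i2 j2)) (u i3 j3) in
    let cba := cmul (cmul (u i3 j3) (u i2 j2)) (u i1 j1) in
    (((r <= 2)%nat /\ s = 3%nat) \/ (r = 3%nat /\ (s <= 2)%nat) -> abc = copp cba) /\
    (((r <= 2)%nat /\ (s <= 2)%nat) \/ (r = 3%nat /\ s = 3%nat) -> abc = cba).

Definition rel_Hplus (N : nat) {A : CStarAlgebra} (u : nat -> nat -> A) : Prop :=
  forall i j k, (i < N)%nat -> (j < N)%nat -> (k < N)%nat -> j <> k ->
    cmul (u i j) (u i k) = c0 /\ cmul (u j i) (u k i) = c0.

(** H_N (signed permutation matrices) = O_N \cap H_N^+ ;  H_N^* = O_N^* \cap H_N^+. *)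
Definition rel_H (N : nat) {A : CStarAlgebra} (u : nat -> nat -> A) : Prop :=
  rel_O N u /\ rel_Hplus N u.
Definition rel_Hstar (N : nat) {A : CStarAlgebra} (u : nat -> nat -> A) : Prop :=
  rel_Ostar N u /\ rel_Hplus N u.

(* Main.v *)
Require Import Defs.
From Stdlib Require Import Reals Arith Lia Lra Bool.

Section Alg.
Variable A : CStarAlgebra.
Implicit Types x y z t : A.

Lemma addr0 x : cadd x c0 = x.
Proof. rewrite caddC; apply cadd0. Qed.
Lemma addNr x : cadd x (copp x) = c0.
Proof. rewrite caddC; apply caddN. Qed.
Lemma add_cancel_r x y t : cadd x t = cadd y t -> x = y.
Proof.
  intro H. rewrite <- (addr0 x), <- (addNr t), caddA, H, <- caddA, addNr, addr0.
  reflexivity.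
Qed.
Lemma opp_unique x y : cadd x y = c0 -> x = copp y.
Proof.
  intro H. rewrite <- (addr0 x), <- (addNr y), caddA, H, cadd0. reflexivity.
Qed.
Lemma mul0l x : cmul c0 x = c0.
Proof.
  apply (add_cancel_r _ _ (cmul c0 x)). rewrite <- cmulDl, cadd0, cadd0. reflexivity.
Qed.
Lemma mul0r x : cmul x c0 = c0.
Proof.
  apply (add_cancel_r _ _ (cmul x c0)). rewrite <- cmulDr, cadd0, cadd0. reflexivity.
Qed.
Lemma oppl x y : cmul (copp x) y = copp (cmul x y).
Proof. apply opp_unique. rewrite <- cmulDl, caddN, mul0l. reflexivity. Qed.
Lemma oppr x y : cmul x (copp y) = copp (cmul x y).
Proof. apply opp_unique. rewrite <- cmulDr, caddN, mul0r. reflexivity. Qed.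
Lemma oppK x : copp (copp x) = x.
Proof. symmetry. apply opp_unique. apply addNr. Qed.
Lemma opp0 : copp (@c0 A) = c0.
Proof. symmetry. apply opp_unique. apply cadd0. Qed.
Lemma rscal0 a : rscal A a c0 = c0.
Proof.
  apply (add_cancel_r _ _ (rscal A a c0)). rewrite <- rscalDr, cadd0, cadd0. reflexivity.
Qed.
Lemma self_neg x : x = copp x -> x = c0.
Proof.
  intro H. assert (H2 : cadd x x = c0) by (rewrite H at 1; apply caddN).
  rewrite <- (rscal1 A x). replace 1%R with (/2 * 2)%R by field.
  rewrite <- rscalA. replace 2%R with (1+1)%R by ring.
  rewrite rscalDl, rscal1, H2, rscal0. reflexivity.
Qed.
Lemma cstar0 : cstar (@c0 A) = c0.
Proof.
  apply (add_cancel_r _ _ (cstar (@c0 A))). rewrite <- cstarD, cadd0, cadd0. reflexivity.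
Qed.
Lemma norm_zero y : cmul y (cstar y) = c0 -> y = c0.
Proof.
  intro H. pose proof (cnorm_cstar A (cstar y)) as E.
  rewrite cstarK, H in E. assert (E0 : cnorm A c0 = 0%R) by (apply cnorm_eq0; reflexivity).
  rewrite E0 in E. symmetry in E. apply Rmult_integral in E.
  assert (Hs : cstar y = c0) by (apply cnorm_eq0; destruct E; assumption).
  rewrite <- (cstarK A y), Hs. apply cstar0.
Qed.

Definition sgn (s : bool) x := if s then copp x else x.
Lemma sgn_mull s x y : cmul (sgn s x) y = sgn s (cmul x y).
Proof. destruct s; simpl; [apply oppl|reflexivity]. Qed.
Lemma sgn_mulr s x y : cmul x (sgn s y) = sgn s (cmul x y).
Proof. destruct s; simpl; [apply oppr|reflexivity]. Qed.
Lemma sgn_comp s s0 x : sgn s (sgn s0 x) = sgn (xorb s s0) x.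
Proof. destruct s, s0; simpl; try rewrite oppK; reflexivity. Qed.
Lemma chain x y z s1 s2 s3 :
  cmul z y = sgn s3 (cmul y z) -> cmul z x = sgn s2 (cmul x z) ->
  cmul y x = sgn s1 (cmul x y) ->
  cmul (cmul z y) x = sgn (xorb s3 (xorb s2 s1)) (cmul (cmul x y) z).
Proof.
  intros H3 H2 H1. rewrite H3, sgn_mull, <- cmulA, H2, sgn_mulr, cmulA, H1, sgn_mull.
  rewrite !sgn_comp, Bool.xorb_assoc_reverse. reflexivity.
Qed.

Lemma mul_csum x n f : cmul x (csum n f) = csum n (fun k => cmul x (f k)).
Proof. induction n; simpl; [apply mul0r|rewrite cmulDr, IHn; reflexivity]. Qed.
Lemma csum_zero n (f : nat -> A) : (forall k, (k < n)%nat -> f k = c0) -> csum n f = c0.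
Proof.
  induction n; simpl; intros H; [reflexivity|].
  rewrite IHn, H, cadd0; [reflexivity|lia|intros; apply H; lia].
Qed.
End Alg.

Definition sb (i j k l : nat) : bool :=
  (negb (Nat.eqb i k && Nat.eqb j l) && (Nat.eqb i k || Nat.eqb j l))%bool.

Ltac eqb_case :=
  repeat match goal with |- context [Nat.eqb ?a ?b] => destruct (Nat.eqb_spec a b) end;
  simpl; try reflexivity; try lia.

Lemma obar_sgn N (A : CStarAlgebra) (u : nat -> nat -> A) : rel_Obar N u ->
  forall i j k l, (i < N)%nat -> (j < N)%nat -> (k < N)%nat -> (l < N)%nat ->
  cmul (u i j) (u k l) = sgn A (sb i j k l) (cmul (u k l) (u i j)).
Proof.
  intros H i j k l Hi Hj Hk Hl. specialize (H i j k l Hi Hj Hk Hl). revert H. unfold sb.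
  destruct (negb (Nat.eqb i k && Nat.eqb j l) && (Nat.eqb i k || Nat.eqb j l))%bool;
  simpl; auto.
Qed.

Lemma sgn_obar N (A : CStarAlgebra) (u : nat -> nat -> A) :
  (forall i j k l, (i < N)%nat -> (j < N)%nat -> (k < N)%nat -> (l < N)%nat ->
  cmul (u i j) (u k l) = sgn A (sb i j k l) (cmul (u k l) (u i j))) -> rel_Obar N u.
Proof.
  intros H i j k l Hi Hj Hk Hl. specialize (H i j k l Hi Hj Hk Hl). revert H. unfold sb.
  destruct (negb (Nat.eqb i k && Nat.eqb j l) && (Nat.eqb i k || Nat.eqb j l))%bool;
  simpl; auto.
Qed.

Lemma sb_true i j k l : sb i j k l = true -> (i = k /\ j <> l) \/ (j = l /\ i <> k).
Proof. unfold sb. eqb_case; intros; try discriminate; lia. Qed.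

Lemma bool_rows i j k l m : j <> k -> l <> j -> l <> k ->
  xorb (sb m l i k) (xorb (sb m l i j) (sb i k i j)) = true.
Proof. intros. unfold sb. eqb_case. Qed.
Lemma bool_cols i j k l m : j <> k -> l <> j -> l <> k ->
  xorb (sb l m k i) (xorb (sb l m j i) (sb k i j i)) = true.
Proof. intros. unfold sb. eqb_case. Qed.
Lemma bool_2 i1 j1 i2 j2 i3 j3 : (i1 < 2)%nat -> (j1 < 2)%nat -> (i2 < 2)%nat ->
  (j2 < 2)%nat -> (i3 < 2)%nat -> (j3 < 2)%nat ->
  xorb (sb i3 j3 i2 j2) (xorb (sb i3 j3 i1 j1) (sb i2 j2 i1 j1)) = false.
Proof. intros. unfold sb. eqb_case. Qed.

Lemma nd3 x y z : ndist3 x y z = 3%nat -> x <> y /\ y <> z /\ x <> z.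
Proof. unfold ndist3. eqb_case; intros; try discriminate; lia. Qed.
Lemma nd2 x y z : (ndist3 x y z <= 2)%nat -> x = y \/ y = z \/ x = z.
Proof. unfold ndist3. eqb_case; intros; lia. Qed.
Lemma nd3' x y z : x <> y -> y <> z -> x <> z -> ndist3 x y z = 3%nat.
Proof. intros. unfold ndist3. eqb_case. Qed.
Lemma nd2' x y : (ndist3 x x y <= 2)%nat.
Proof. unfold ndist3. eqb_case. Qed.

Lemma kill_col N (A : CStarAlgebra) (u : nat -> nat -> A) (p : A) l : orth_sa N u -> (l < N)%nat ->
  (forall m, (m < N)%nat -> cmul p (u m l) = c0) -> p = c0.
Proof.
  intros [_ [_ Hc]] Hl H. specialize (Hc l l Hl Hl). unfold kron in Hc.
  rewrite Nat.eqb_refl in Hc. rewrite <- (cmul1r A p), <- Hc, mul_csum.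
  apply csum_zero. intros k Hk. rewrite cmulA, H, mul0l; auto.
Qed.
Lemma kill_row N (A : CStarAlgebra) (u : nat -> nat -> A) (p : A) l : orth_sa N u -> (l < N)%nat ->
  (forall m, (m < N)%nat -> cmul p (u l m) = c0) -> p = c0.
Proof.
  intros [_ [Hc _]] Hl H. specialize (Hc l l Hl Hl). unfold kron in Hc.
  rewrite Nat.eqb_refl in Hc. rewrite <- (cmul1r A p), <- Hc, mul_csum.
  apply csum_zero. intros k Hk. rewrite cmulA, H, mul0l; auto.
Qed.

Lemma third N j k : (3 <= N)%nat -> exists l, (l < N)%nat /\ l <> j /\ l <> k.
Proof.
  intros HN. assert (H : (0%nat <> j /\ 0%nat <> k) \/ (1%nat <> j /\ 1%nat <> k) \/ (2%nat <> j /\ 2%nat <> k)) by lia.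
  destruct H as [[]|[[]|[]]]; [exists 0%nat|exists 1%nat|exists 2%nat]; lia.
Qed.

Section U.
Variable N : nat.
Variable A : CStarAlgebra.
Variable u : nat -> nat -> A.

Lemma O_Ostar : rel_O N u -> rel_Ostar N u.
Proof.
  intros H i1 j1 i2 j2 i3 j3 ? ? ? ? ? ?.
  rewrite (H i1 j1 i2 j2), <- cmulA, (H i1 j1 i3 j3), cmulA, (H i2 j2 i3 j3) by assumption.
  reflexivity.
Qed.

Lemma sb_row i j k : j <> k -> sb i j i k = true.
Proof. intros. unfold sb. rewrite Nat.eqb_refl. eqb_case. Qed.
Lemma sb_col i j k : j <> k -> sb j i k i = true.
Proof. intros. unfold sb. rewrite (Nat.eqb_refl i). eqb_case. Qed.

Lemma Hplus_O_Obar : rel_O N u -> rel_Obar N u -> rel_Hplus N u.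
Proof.
  intros HO HB i j k Hi Hj Hk Hjk. split; apply self_neg.
  - rewrite (obar_sgn N A u HB) at 1 by assumption. rewrite sb_row by assumption.
    simpl. rewrite HO by assumption. reflexivity.
  - rewrite (obar_sgn N A u HB) at 1 by assumption. rewrite sb_col by assumption.
    simpl. rewrite HO by assumption. reflexivity.
Qed.

Lemma both_zero i j k l : rel_Hplus N u -> (i < N)%nat -> (j < N)%nat -> (k < N)%nat -> (l < N)%nat ->
  sb i j k l = true -> cmul (u i j) (u k l) = c0 /\ cmul (u k l) (u i j) = c0.
Proof.
  intros HP Hi Hj Hk Hl E. apply sb_true in E. destruct E as [[-> E]|[-> E]].
  - split; [apply (HP k j l)|apply (HP k l j)]; auto.
  - split; [apply (HP l i k)|apply (HP l k i)]; auto.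
Qed.

Lemma H_Obar : rel_O N u -> rel_Hplus N u -> rel_Obar N u.
Proof.
  intros HO HP. apply sgn_obar. intros i j k l Hi Hj Hk Hl.
  destruct (sb i j k l) eqn:E.
  - destruct (both_zero i j k l HP Hi Hj Hk Hl E) as [E1 E2]. rewrite E1, E2. simpl.
    rewrite opp0. reflexivity.
  - simpl. apply HO; auto.
Qed.

Lemma Obar_H_O : rel_Obar N u -> rel_Hplus N u -> rel_O N u.
Proof.
  intros HB HP i j k l Hi Hj Hk Hl. rewrite (obar_sgn N A u HB) by assumption.
  destruct (sb i j k l) eqn:E.
  - destruct (both_zero i j k l HP Hi Hj Hk Hl E) as [E1 E2]. rewrite E2. simpl.
    rewrite opp0. reflexivity.
  - reflexivity.
Qed.

Lemma Hplus_Os_Ob : (3 <= N)%nat -> orth_sa N u -> rel_Ostar N u -> rel_Obar N u -> rel_Hplus N u.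
Proof.
  intros HN Hu HS HB i j k Hi Hj Hk Hjk. destruct (third N j k HN) as [l [Hl [Hlj Hlk]]].
  split.
  - apply (kill_col N A u _ l Hu Hl). intros m Hm. apply self_neg.
    rewrite (HS i j i k m l) at 1 by assumption.
    rewrite (chain A (u i j) (u i k) (u m l) (sb i k i j) (sb m l i j) (sb m l i k)).
    + rewrite bool_rows by auto. reflexivity.
    + apply (obar_sgn N); auto.
    + apply (obar_sgn N); auto.
    + apply (obar_sgn N); auto.
  - apply (kill_row N A u _ l Hu Hl). intros m Hm. apply self_neg.
    rewrite (HS j i k i l m) at 1 by assumption.
    rewrite (chain A (u j i) (u k i) (u l m) (sb k i j i) (sb l m j i) (sb l m k i)).
    + rewrite bool_cols by auto. reflexivity.
    + apply (obar_sgn N); auto.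
    + apply (obar_sgn N); auto.
    + apply (obar_sgn N); auto.
Qed.

Lemma Hplus_Os_Obs : (3 <= N)%nat -> orth_sa N u -> rel_Ostar N u -> rel_Obarstar N u -> rel_Hplus N u.
Proof.
  intros HN Hu HS HB i j k Hi Hj Hk Hjk. destruct (third N j k HN) as [l [Hl [Hlj Hlk]]].
  split.
  - apply (kill_col N A u _ l Hu Hl). intros m Hm. apply self_neg.
    pose proof (HB i j i k m l Hi Hj Hi Hk Hm Hl) as H. cbv zeta in H.
    destruct H as [H _]. rewrite H at 1. rewrite <- HS by assumption. reflexivity.
    left. split; [apply nd2'|apply nd3'; auto].
  - apply (kill_row N A u _ l Hu Hl). intros m Hm. apply self_neg.
    pose proof (HB j i k i l m Hj Hi Hk Hi Hl Hm) as H. cbv zeta in H.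
    destruct H as [H _]. rewrite H at 1. rewrite <- HS by assumption. reflexivity.
    right. split; [apply nd3'; auto|apply nd2'].
Qed.

Lemma Hstar_zero : orth_sa N u -> rel_Ostar N u -> rel_Hplus N u ->
  forall i1 j1 i2 j2 i3 j3,
    (i1 < N)%nat -> (j1 < N)%nat -> (i2 < N)%nat -> (j2 < N)%nat ->
    (i3 < N)%nat -> (j3 < N)%nat ->
    ((ndist3 i1 i2 i3 <= 2)%nat /\ ndist3 j1 j2 j3 = 3%nat) \/
    (ndist3 i1 i2 i3 = 3%nat /\ (ndist3 j1 j2 j3 <= 2)%nat) ->
    cmul (cmul (u i1 j1) (u i2 j2)) (u i3 j3) = c0.
Proof.
  intros Hu HS HP i1 j1 i2 j2 i3 j3 H1 H2 H3 H4 H5 H6 Hc.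
  destruct Hu as [Hsa _].
  assert (Hn : cmul (u i1 j1) (u i3 j3) = c0 -> cmul (cmul (u i1 j1) (u i2 j2)) (u i3 j3) = c0).
  { intro E. apply norm_zero. rewrite cstarM, cstarM, !Hsa by assumption.
    rewrite !cmulA.
    assert (K : cmul (cmul (cmul (u i1 j1) (u i2 j2)) (u i3 j3)) (u i3 j3) =
                cmul (cmul (cmul (u i1 j1) (u i3 j3)) (u i3 j3)) (u i2 j2)).
    { rewrite <- (cmulA A (u i1 j1) (u i2 j2)), <- cmulA.
      rewrite (HS i2 j2 i3 j3 i3 j3) by assumption. rewrite !cmulA. reflexivity. }
    rewrite K, E, !mul0l. reflexivity. }
  destruct Hc as [[Hr Hs]|[Hr Hs]].
  - apply nd2 in Hr. apply nd3 in Hs. destruct Hs as [? [? ?]].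
    destruct Hr as [ -> | [ -> | -> ] ].
    + rewrite (proj1 (HP i2 j1 j2 H3 H2 H4 ltac:(auto))). apply mul0l.
    + rewrite <- cmulA, (proj1 (HP i3 j2 j3 H5 H4 H6 ltac:(auto))). apply mul0r.
    + apply Hn. apply (proj1 (HP i3 j1 j3 H5 H2 H6 ltac:(auto))).
  - apply nd2 in Hs. apply nd3 in Hr. destruct Hr as [? [? ?]].
    destruct Hs as [ -> | [ -> | -> ] ].
    + rewrite (proj2 (HP j2 i1 i2 H4 H1 H3 ltac:(auto))). apply mul0l.
    + rewrite <- cmulA, (proj2 (HP j3 i2 i3 H6 H3 H5 ltac:(auto))). apply mul0r.
    + apply Hn. apply (proj2 (HP j3 i1 i3 H6 H1 H5 ltac:(auto))).
Qed.

Lemma Hstar_Obarstar : orth_sa N u -> rel_Ostar N u -> rel_Hplus N u -> rel_Obarstar N u.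
Proof.
  intros Hu HS HP i1 j1 i2 j2 i3 j3 H1 H2 H3 H4 H5 H6. cbv zeta. split.
  - intro Hc. pose proof (Hstar_zero Hu HS HP i1 j1 i2 j2 i3 j3 H1 H2 H3 H4 H5 H6 Hc) as Z.
    rewrite Z. rewrite (HS i1 j1 i2 j2 i3 j3) in Z by assumption. rewrite Z, opp0. reflexivity.
  - intros _. apply HS; assumption.
Qed.

End U.

Lemma Obar_Ostar2 (A : CStarAlgebra) (u : nat -> nat -> A) : rel_Obar 2 u -> rel_Ostar 2 u.
Proof.
  intros HB i1 j1 i2 j2 i3 j3 H1 H2 H3 H4 H5 H6. symmetry.
  rewrite (chain A (u i1 j1) (u i2 j2) (u i3 j3) (sb i2 j2 i1 j1) (sb i3 j3 i1 j1) (sb i3 j3 i2 j2)).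
  - rewrite bool_2 by assumption. reflexivity.
  - apply (obar_sgn 2); auto.
  - apply (obar_sgn 2); auto.
  - apply (obar_sgn 2); auto.
Qed.

Lemma Ostar_Obarstar2 (A : CStarAlgebra) (u : nat -> nat -> A) : rel_Ostar 2 u -> rel_Obarstar 2 u.
Proof.
  intros HS i1 j1 i2 j2 i3 j3 H1 H2 H3 H4 H5 H6. cbv zeta. split.
  - intros [[_ Hs]|[Hr _]]; exfalso.
    + apply nd3 in Hs. lia.
    + apply nd3 in Hr. lia.
  - intros _. apply HS; assumption.
Qed.

Section Abs.
Variable A : CStarAlgebra.
Implicit Types x y z : A.

Lemma comm_sq x y : cadd (cmul x x) (cmul y y) = Defs.c1 -> cmul (cmul x x) y = cmul y (cmul x x).
Proof.
  intro H. apply (add_cancel_r A _ _ (cmul (cmul y y) y)).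
  transitivity y.
  - rewrite <- cmulDl, H, cmul1l. reflexivity.
  - rewrite <- (cmulA A y y y), <- cmulDr, H, cmul1r. reflexivity.
Qed.
Lemma comm_sq' x y : cadd (cmul x x) (cmul y y) = Defs.c1 -> cmul (cmul y y) x = cmul x (cmul y y).
Proof. intro H. apply comm_sq. rewrite caddC. exact H. Qed.
Lemma sq_eq x y z : cadd (cmul x x) (cmul y y) = Defs.c1 -> cadd (cmul z z) (cmul y y) = Defs.c1 ->
  cmul x x = cmul z z.
Proof. intros H1 H2. apply (add_cancel_r A _ _ (cmul y y)). rewrite H1, H2. reflexivity. Qed.
Lemma rep1 x y : cmul (cmul x x) y = cmul y (cmul x x) -> cmul (cmul x x) y = cmul (cmul y x) x.
Proof. intro H. rewrite H, cmulA. reflexivity. Qed.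
Lemma rep2 x y : cmul (cmul y y) x = cmul x (cmul y y) -> cmul (cmul x y) y = cmul (cmul y y) x.
Proof. intro H. rewrite H, cmulA. reflexivity. Qed.

Definition mem4 (a b c d x : A) := x = a \/ x = b \/ x = c \/ x = d.

Lemma ostar_abs (a b c d : A)
  (h1 : cadd (cmul a a) (cmul b b) = Defs.c1) (h2 : cadd (cmul c c) (cmul d d) = Defs.c1)
  (h3 : cadd (cmul a a) (cmul c c) = Defs.c1) (h4 : cadd (cmul b b) (cmul d d) = Defs.c1)
  (r1 : cadd (cmul a c) (cmul b d) = c0) (r2 : cadd (cmul c a) (cmul d b) = c0)
  (r3 : cadd (cmul a b) (cmul c d) = c0) (r4 : cadd (cmul b a) (cmul d c) = c0) :
  forall x y z, mem4 a b c d x -> mem4 a b c d y -> mem4 a b c d z ->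
  cmul (cmul x y) z = cmul (cmul z y) x.
Proof.
  assert (Ead : cmul a a = cmul d d).
  { apply (sq_eq _ b). exact h1. rewrite caddC. exact h4. }
  assert (Ebc : cmul b b = cmul c c).
  { apply (sq_eq _ a). rewrite caddC. exact h1. rewrite caddC. exact h3. }
  assert (Hz : forall x y, mem4 a b c d x -> mem4 a b c d y ->
     cmul (cmul x x) y = cmul y (cmul x x)).
  { intros x y [ -> | [ -> | [ -> | -> ] ] ] [ -> | [ -> | [ -> | -> ] ] ];
    first [ symmetry; apply cmulA | apply comm_sq; assumption | apply comm_sq'; assumption
          | rewrite Ead; symmetry; apply cmulA | rewrite <- Ead; symmetry; apply cmulA
          | rewrite Ebc; symmetry; apply cmulA | rewrite <- Ebc; symmetry; apply cmulA ]. }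
  assert (ma : mem4 a b c d a) by (unfold mem4; auto).
  assert (mb : mem4 a b c d b) by (unfold mem4; auto).
  assert (mc : mem4 a b c d c) by (unfold mem4; auto).
  assert (md : mem4 a b c d d) by (unfold mem4; auto).
  pose proof (opp_unique A _ _ r1) as Hac.
  pose proof (opp_unique A _ _ r2) as Hca.
  pose proof (opp_unique A _ _ r3) as Hab.
  pose proof (opp_unique A _ _ r4) as Hba.
  rewrite caddC in r1, r2, r3, r4.
  pose proof (opp_unique A _ _ r1) as Hbd.
  pose proof (opp_unique A _ _ r2) as Hdb.
  pose proof (opp_unique A _ _ r3) as Hcd.
  pose proof (opp_unique A _ _ r4) as Hdc.
  assert (Tabc : cmul (cmul a b) c = cmul (cmul c b) a).
  { rewrite Hab, oppl, <- (cmulA A c b a), Hba, oppr, cmulA. reflexivity. }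
  assert (Tabd : cmul (cmul a b) d = cmul (cmul d b) a).
  { rewrite Hab, oppl, <- (cmulA A d b a), Hba, oppr. f_equal.
    rewrite <- (cmulA A c d d), (cmulA A d d c), (Hz d c md mc). reflexivity. }
  assert (Tacb : cmul (cmul a c) b = cmul (cmul b c) a).
  { rewrite Hac, oppl, <- (cmulA A b c a), Hca, oppr, cmulA. reflexivity. }
  assert (Tacd : cmul (cmul a c) d = cmul (cmul d c) a).
  { rewrite Hac, oppl, <- (cmulA A d c a), Hca, oppr. f_equal.
    rewrite <- (cmulA A b d d), (cmulA A d d b), (Hz d b md mb). reflexivity. }
  assert (Tadb : cmul (cmul a d) b = cmul (cmul b d) a).
  { rewrite <- (cmulA A a d b), Hdb, oppr, Hbd, oppl, cmulA. reflexivity. }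
  assert (Tadc : cmul (cmul a d) c = cmul (cmul c d) a).
  { rewrite <- (cmulA A a d c), Hdc, oppr, Hcd, oppl, cmulA. reflexivity. }
  assert (Tbac : cmul (cmul b a) c = cmul (cmul c a) b).
  { rewrite <- (cmulA A b a c), Hac, oppr, Hca, oppl. f_equal.
    rewrite cmulA, <- (cmulA A d b b), (Hz b d mb md). reflexivity. }
  assert (Tbad : cmul (cmul b a) d = cmul (cmul d a) b).
  { rewrite Hba, oppl, <- (cmulA A d a b), Hab, oppr, cmulA. reflexivity. }
  assert (Tbcd : cmul (cmul b c) d = cmul (cmul d c) b).
  { rewrite <- (cmulA A b c d), Hcd, oppr, Hdc, oppl, cmulA. reflexivity. }
  assert (Tbdc : cmul (cmul b d) c = cmul (cmul c d) b).
  { rewrite Hbd, oppl, <- (cmulA A c d b), Hdb, oppr. f_equal.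
    rewrite <- (cmulA A a c c), (cmulA A c c a), (Hz c a mc ma). reflexivity. }
  assert (Tcad : cmul (cmul c a) d = cmul (cmul d a) c).
  { rewrite Hca, oppl, <- (cmulA A d a c), Hac, oppr, cmulA. reflexivity. }
  assert (Tcbd : cmul (cmul c b) d = cmul (cmul d b) c).
  { rewrite <- (cmulA A c b d), Hbd, oppr, Hdb, oppl, cmulA. reflexivity. }
  intros x y z [ -> | [ -> | [ -> | -> ] ] ] [ -> | [ -> | [ -> | -> ] ] ]
    [ -> | [ -> | [ -> | -> ] ] ];
  first [ reflexivity | assumption | symmetry; assumption
        | apply rep1; apply Hz; assumption | apply rep2; apply Hz; assumption ].
Qed.
End Abs.

Local Open Scope nat_scope.
Lemma ostar2 (A : CStarAlgebra) (u : nat -> nat -> A) : orth_sa 2 u -> rel_Ostar 2 u.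
Proof.
  intros Hu. pose proof Hu as [_ [Hr Hc]].
  assert (M : forall i j, (i < 2)%nat -> (j < 2)%nat -> mem4 A (u 0 0) (u 0 1) (u 1 0) (u 1 1) (u i j)).
  { intros i j Hi Hj. unfold mem4.
    destruct i as [|[|i]]; [| |lia]; destruct j as [|[|j]]; try lia; auto. }
  intros i1 j1 i2 j2 i3 j3 H1 H2 H3 H4 H5 H6.
  pose proof (Hr 0 0 ltac:(lia) ltac:(lia)) as h1.
  pose proof (Hr 1 1 ltac:(lia) ltac:(lia)) as h2.
  pose proof (Hc 0 0 ltac:(lia) ltac:(lia)) as h3.
  pose proof (Hc 1 1 ltac:(lia) ltac:(lia)) as h4.
  pose proof (Hr 0 1 ltac:(lia) ltac:(lia)) as r1.
  pose proof (Hr 1 0 ltac:(lia) ltac:(lia)) as r2.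
  pose proof (Hc 0 1 ltac:(lia) ltac:(lia)) as r3.
  pose proof (Hc 1 0 ltac:(lia) ltac:(lia)) as r4.
  simpl in h1, h2, h3, h4, r1, r2, r3, r4. unfold kron in *. simpl in *.
  rewrite !cadd0 in h1, h2, h3, h4, r1, r2, r3, r4.
  apply (ostar_abs A _ _ _ _ h1 h2 h3 h4 r1 r2 r3 r4); apply M; assumption.
Qed.

Theorem proposition4p2 :
  (forall (N : nat), (3 <= N)%nat ->
   forall (A : CStarAlgebra) (u : nat -> nat -> A), orth_sa N u ->
     ((rel_O N u /\ rel_Obar N u) <-> rel_H N u) /\
     ((rel_O N u /\ rel_Obarstar N u) <-> rel_H N u) /\
     ((rel_Ostar N u /\ rel_Obar N u) <-> rel_H N u) /\
     ((rel_Ostar N u /\ rel_Obarstar N u) <-> rel_Hstar N u)) /\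
  (forall (A : CStarAlgebra) (u : nat -> nat -> A), orth_sa 2 u ->
     ((rel_O 2 u /\ rel_Obar 2 u) <-> rel_H 2 u) /\
     ((rel_O 2 u /\ rel_Obarstar 2 u) <-> rel_O 2 u) /\
     ((rel_Ostar 2 u /\ rel_Obar 2 u) <-> rel_Obar 2 u) /\
     ((rel_Ostar 2 u /\ rel_Obarstar 2 u) <-> True)).
Proof.
  unfold rel_H, rel_Hstar. split.
  - intros N HN A u Hu. split; [|split; [|split]]; split.
    + intros [HO HB]. split; [exact HO|]. apply Hplus_O_Obar; assumption.
    + intros [HO HP]. split; [exact HO|]. apply H_Obar; assumption.
    + intros [HO HB]. split; [exact HO|]. apply Hplus_Os_Obs; try assumption.
      apply O_Ostar; assumption.
    + intros [HO HP]. split; [exact HO|]. apply Hstar_Obarstar; try assumption.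
      apply O_Ostar; assumption.
    + intros [HS HB]. assert (HP : rel_Hplus N u) by (apply Hplus_Os_Ob; assumption).
      split; [apply Obar_H_O|]; assumption.
    + intros [HO HP]. split; [apply O_Ostar|apply H_Obar]; assumption.
    + intros [HS HB]. split; [exact HS|]. apply Hplus_Os_Obs; assumption.
    + intros [HS HP]. split; [exact HS|]. apply Hstar_Obarstar; assumption.
  - intros A u Hu. split; [|split; [|split]]; split.
    + intros [HO HB]. split; [exact HO|]. apply Hplus_O_Obar; assumption.
    + intros [HO HP]. split; [exact HO|]. apply H_Obar; assumption.
    + intros [HO _]. exact HO.
    + intros HO. split; [exact HO|]. apply Ostar_Obarstar2, O_Ostar; assumption.
    + intros [_ HB]. exact HB.
    + intros HB. split; [apply Obar_Ostar2|]; assumption.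
    + intros _. exact I.
    + intros _. pose proof (ostar2 A u Hu). split; [|apply Ostar_Obarstar2]; assumption.
Qed.
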